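(* Let $l\ge1$ and work in $\mathfrak{OA}_{1,2l}=\mathfrak{OA}/\mathfrak I_{(t-1)^{2l}}$, writing $X_k,Y_k$ for the images. Set $H_0=\tfrac12X_0$, $E_0=\tfrac14Y_1+\tfrac18\big(X_1-\sum_{k=1}^{2l-1}(-1)^kX_k\big)$, $F_0=\tfrac14Y_1-\tfrac18\big(X_1-\sum_{k=1}^{2l-1}(-1)^kX_k\big)$, $H_1=[E_0,F_0]$, and inductively $E_{j+1}=\tfrac12[H_1,E_j]$, $F_{j+1}=-\tfrac12[H_1,F_j]$ for $0\le j\le l-2$. Then: (i) $[E_{j+1},F_{k-1}]=[E_j,F_k]$ whenever $0\le j\le l-2$ and $1\le k\le l-1$; hence $H_m:=[E_j,F_k]$ with $j+k+1=m$ ($0\le j,k\le l-1$) is well defined for $1\le m\le 2l-1$, and agrees with $H_1$ for $m=1$. (ii) $\{E_j,F_j,H_j:0\le j\le l-1\}$ is a basis of $\mathfrak{OA}_{1,2l}$, and $H_m=0$ for $l\le m\le 2l-1$. (iii) For $0\le j,k\le l-1$: $[E_j,F_k]=H_{j+k+1}$, $[H_j,E_k]=2E_{j+k}$, $[H_j,F_k]=-2F_{j+k}$, $[E_j,E_k]=0$, $[F_j,F_k]=0$, where any $E_m,F_m,H_m$ with $m\ge l$ is interpreted as $0$.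
   Context: Work over $\mathbb C$. $\mathfrak{sl}_2$ has basis $e,f,h$ with $[e,f]=h$, $[h,e]=2e$, $[h,f]=-2f$. The Onsager algebra is the Lie subalgebra $\mathfrak{OA}=\{p(t)e+p(t^{-1})f+q(t)h:\ p,q\in\mathbb C[t,t^{-1}],\ q(t^{-1})=-q(t)\}$ of the loop algebra $\mathbb C[t,t^{-1}]\otimes\mathfrak{sl}_2$ (bracket $[px,qy]=pq[x,y]$). $\mathfrak I_{(t-1)^L}=\{p(t)e+p(t^{-1})f+q(t)h\in\mathfrak{OA}: p,q\in(t-1)^L\mathbb C[t,t^{-1}]\}$. For $k\ge0$, $X_k=2(t-1)^ke+2(t^{-1}-1)^kf$ and $Y_k=(-1)^k\big((t-1)^k-(t^{-1}-1)^k\big)h$, elements of $\mathfrak{OA}$. *)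

(* Defs.v *)
From mathcomp Require Import all_boot all_algebra.
From mathcomp Require Import reals complex.
Set Implicit Arguments.
Unset Strict Implicit.
Unset Printing Implicit Defensive.
Import GRing.Theory Num.Theory.
Local Open Scope ring_scope.

Section Onsager.
Variable R : realType.
Local Notation C := (R[i]).

(* sl_2 realised as traceless 2x2 matrices: e = E_01, f = E_10, h = E_00 - E_11;
   then [e,f] = h, [h,e] = 2e, [h,f] = -2f for the commutator bracket. *)
Definition sl2e : 'M[C]_2 := delta_mx 0 1.
Definition sl2f : 'M[C]_2 := delta_mx 1 0.
Definition sl2h : 'M[C]_2 := delta_mx 0 0 - delta_mx 1 1.

(* Loop algebra C[t,t^-1] (x) sl_2, with Laurent polynomials viewed as
   (polynomial) functions on C^x = C \ {0}; only values at z != 0 matter. *)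
Definition loop := C -> 'M[C]_2.

Definition laurent (p : C -> C) : Prop :=
  exists (P : {poly C}) (n : nat), forall z : C, z != 0 -> p z = P.[z] / z ^+ n.

Definition mkL (p q r : C -> C) : loop :=
  fun z => p z *: sl2e + q z *: sl2f + r z *: sl2h.

Definition OA_elt (p q : C -> C) : loop := mkL p (fun z => p z^-1) q.

Definition in_OA (x : loop) : Prop :=
  exists p q : C -> C, [/\ laurent p, laurent q,
    (forall z : C, z != 0 -> q z^-1 = - q z) &
    (forall z : C, z != 0 -> x z = OA_elt p q z)].

Definition divisible (L : nat) (p : C -> C) : Prop :=
  exists g : C -> C, laurent g /\ forall z : C, z != 0 -> p z = (z - 1) ^+ L * g z.

Definition in_I (L : nat) (x : loop) : Prop :=
  exists p q : C -> C, [/\ laurent p, laurent q,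
    (forall z : C, z != 0 -> q z^-1 = - q z),
    divisible L p /\ divisible L q &
    (forall z : C, z != 0 -> x z = OA_elt p q z)].

Definition lzero : loop := fun _ => 0.
Definition ladd (x y : loop) : loop := fun z => x z + y z.
Definition lsub (x y : loop) : loop := fun z => x z - y z.
Definition lscale (c : C) (x : loop) : loop := fun z => c *: x z.
Definition lbr (x y : loop) : loop := fun z => x z *m y z - y z *m x z.

(* equality of images in OA / I_{(t-1)^L} (for representatives in OA) *)
Definition qeq (L : nat) (x y : loop) : Prop := in_I L (lsub x y).

Definition X (k : nat) : loop :=
  mkL (fun z => 2%:R * (z - 1) ^+ k) (fun z => 2%:R * (z^-1 - 1) ^+ k) (fun _ => 0).
Definition Y (k : nat) : loop :=
  mkL (fun _ => 0) (fun _ => 0)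
      (fun z => (-1) ^+ k * ((z - 1) ^+ k - (z^-1 - 1) ^+ k)).

Variable l : nat.

Definition H0 : loop := lscale (2%:R)^-1 (X 0).
Definition Ssum : loop :=
  fun z => X 1 z - \sum_(1 <= k < (2 * l)%N) (-1) ^+ k *: X k z.
Definition E0 : loop := fun z => (4%:R)^-1 *: Y 1 z + (8%:R)^-1 *: Ssum z.
Definition F0 : loop := fun z => (4%:R)^-1 *: Y 1 z - (8%:R)^-1 *: Ssum z.
Definition H1 : loop := lbr E0 F0.

Fixpoint E (j : nat) : loop :=
  match j with
  | 0 => E0
  | j'.+1 => lscale (2%:R)^-1 (lbr H1 (E j'))
  end.
Fixpoint F (j : nat) : loop :=
  match j with
  | 0 => F0
  | j'.+1 => lscale (- (2%:R)^-1) (lbr H1 (F j'))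
  end.

(* H_0 = X_0/2 and, for m >= 1, H_m := [E_j, F_k] for one particular choice
   j + k + 1 = m with 0 <= j,k <= l-1 (namely j = min(m-1, l-1)). *)
Definition H (m : nat) : loop :=
  if m is m'.+1 then lbr (E (minn m' l.-1)) (F (m' - minn m' l.-1))
  else H0.

Definition Ez (m : nat) : loop := if (m < l)%N then E m else lzero.
Definition Fz (m : nat) : loop := if (m < l)%N then F m else lzero.
Definition Hz (m : nat) : loop := if (m < l)%N then H m else lzero.

Definition lincomb (a b c : nat -> C) : loop :=
  fun z => \sum_(j < l) (a j *: E j z + b j *: F j z + c j *: H j z).

End Onsager.

Arguments X : clear implicits.
Arguments Y : clear implicits.
Arguments H0 : clear implicits.
Arguments Ssum : clear implicits.
Arguments E0 : clear implicits.
Arguments F0 : clear implicits.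
Arguments H1 : clear implicits.
Arguments E : clear implicits.
Arguments F : clear implicits.
Arguments H : clear implicits.
Arguments Ez : clear implicits.
Arguments Fz : clear implicits.
Arguments Hz : clear implicits.
Arguments lzero : clear implicits.
Arguments lincomb : clear implicits.

(* Main.v *)
Require Import Defs.
From mathcomp Require Import all_boot all_algebra.
From mathcomp Require Import reals complex.
From mathcomp Require Import ring zify.
Import GRing.Theory Num.Theory.
Local Open Scope ring_scope.
Set Implicit Arguments.
Unset Strict Implicit.

Section Dev.
Variable R : realType.
Local Notation C := (R[i]).

Lemma laurent_ext (p q : C -> C) : (forall z, z != 0 -> p z = q z) -> laurent p -> laurent q.
Proof. move=> e [P [n h]]; exists P, n => z nz; by rewrite -e // h. Qed.

Lemma laurent_poly (P : {poly C}) : laurent (fun z => P.[z]).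
Proof. exists P, 0%N => z _; by rewrite expr0 divr1. Qed.

Lemma laurent_const (c : C) : laurent (fun _ => c).
Proof. apply: laurent_ext (laurent_poly c%:P) => z _; by rewrite hornerC. Qed.

Lemma laurent_id : laurent (fun z : C => z).
Proof. apply: laurent_ext (laurent_poly 'X) => z _; by rewrite hornerX. Qed.

Lemma laurent_inv : laurent (fun z : C => z^-1).
Proof. exists 1, 1%N => z nz; by rewrite hornerC expr1 div1r. Qed.

Lemma laurent_add (p q : C -> C) : laurent p -> laurent q -> laurent (fun z => p z + q z).
Proof.
move=> [P [n hp]] [Q [m hq]]; exists (P * 'X^m + Q * 'X^n), (n + m)%N => z nz.
rewrite hp // hq // !hornerE exprD.
have ha := expf_neq0 n nz; have hb := expf_neq0 m nz.
move: (z ^+ n) (z ^+ m) ha hb => a b ha hb; by field; rewrite ha hb.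
Qed.

Lemma laurent_mul (p q : C -> C) : laurent p -> laurent q -> laurent (fun z => p z * q z).
Proof.
move=> [P [n hp]] [Q [m hq]]; exists (P * Q), (n + m)%N => z nz.
rewrite hp // hq // hornerM exprD.
have ha := expf_neq0 n nz; have hb := expf_neq0 m nz.
move: (z ^+ n) (z ^+ m) ha hb => a b ha hb; by field; rewrite ha hb.
Qed.

Lemma laurent_scale (c : C) (p : C -> C) : laurent p -> laurent (fun z => c * p z).
Proof. move=> h; exact: laurent_mul (laurent_const c) h. Qed.

Lemma laurent_opp (p : C -> C) : laurent p -> laurent (fun z => - p z).
Proof. move=> h; apply: laurent_ext (laurent_scale (-1) h) => z _; by rewrite mulN1r. Qed.

Lemma laurent_sub (p q : C -> C) : laurent p -> laurent q -> laurent (fun z => p z - q z).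
Proof. move=> hp hq; exact: laurent_add hp (laurent_opp hq). Qed.

Lemma laurent_pow (p : C -> C) n : laurent p -> laurent (fun z => p z ^+ n).
Proof.
move=> h; elim: n => [|n IH].
  apply: laurent_ext (laurent_const 1) => z _; by rewrite expr0.
apply: laurent_ext (laurent_mul h IH) => z _; by rewrite exprS.
Qed.

Lemma laurent_sum n (f : nat -> C -> C) : (forall i, laurent (f i)) ->
  laurent (fun z => \sum_(i < n) f i z).
Proof.
move=> h; elim: n => [|n IH].
  apply: laurent_ext (laurent_const 0) => z _; by rewrite big_ord0.
apply: laurent_ext (laurent_add IH (h n)) => z _; by rewrite big_ord_recr.
Qed.

Lemma laurent_sig (p : C -> C) : laurent p -> laurent (fun z => p z^-1).
Proof.
move=> [P [n hp]].
have hP : laurent (fun z => P.[z^-1]).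
  elim/poly_ind: P {hp} => [|Q c IH].
    apply: laurent_ext (laurent_const 0) => z _; by rewrite horner0.
  apply: laurent_ext (laurent_add (laurent_mul IH laurent_inv) (laurent_const c)) => z _.
  by rewrite !hornerE.
apply: laurent_ext (laurent_mul hP (laurent_pow n laurent_id)) => z nz.
rewrite hp ?invr_eq0 // exprVn invrK //.
Qed.

End Dev.

Section Dev.
Variable R : realType.
Local Notation C := (R[i]).

Lemma I2 (k : 'I_2) : k = 0 \/ k = 1.
Proof. case: k => [[|[|k]] hk]; [left|right|by []]; exact: val_inj. Qed.

Definition M3 (a b c : C) : 'M[C]_2 := a *: sl2e R + b *: sl2f R + c *: sl2h R.

Lemma M3E a b c i j : M3 a b c i j =
  if i == 0 then (if j == 0 then c else a) else (if j == 0 then b else - c).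
Proof.
rewrite /M3 /sl2e /sl2f /sl2h !mxE.
by case: (I2 i) => ->; case: (I2 j) => -> /=; ring.
Qed.

Lemma M3_br a1 b1 c1 a2 b2 c2 :
  M3 a1 b1 c1 *m M3 a2 b2 c2 - M3 a2 b2 c2 *m M3 a1 b1 c1 =
  M3 (2%:R * (c1 * a2 - a1 * c2)) (2%:R * (b1 * c2 - c1 * b2)) (a1 * b2 - b1 * a2).
Proof.
apply/matrixP => i j; rewrite !mxE !big_ord_recl !big_ord0 !M3E.
by case: (I2 i) => ->; case: (I2 j) => -> /=; ring.
Qed.

Lemma M3_inj a1 b1 c1 a2 b2 c2 : M3 a1 b1 c1 = M3 a2 b2 c2 ->
  [/\ a1 = a2, b1 = b2 & c1 = c2].
Proof.
move=> e; have := congr1 (fun M : 'M[C]_2 => M 0 1) e; have := congr1 (fun M : 'M[C]_2 => M 1 0) e;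
have := congr1 (fun M : 'M[C]_2 => M 0 0) e; rewrite /= !M3E /=; done.
Qed.

Lemma M3_lin k a1 b1 c1 a2 b2 c2 : k *: M3 a1 b1 c1 + M3 a2 b2 c2 =
   M3 (k * a1 + a2) (k * b1 + b2) (k * c1 + c2).
Proof. apply/matrixP => i j; rewrite mxE [X in X + _]mxE !M3E. by case: ifP; case: ifP => _ _; ring. Qed.

Lemma M3_0 : M3 0 0 0 = 0.
Proof. apply/matrixP => i j; rewrite M3E mxE. by case: ifP; case: ifP => _ _; ring. Qed.

Lemma M3_add a1 b1 c1 a2 b2 c2 : M3 a1 b1 c1 + M3 a2 b2 c2 =
   M3 (a1 + a2) (b1 + b2) (c1 + c2).
Proof. by rewrite -[X in X + _]scale1r M3_lin !mul1r. Qed.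

Lemma M3_scale k a b c : k *: M3 a b c = M3 (k * a) (k * b) (k * c).
Proof. by rewrite -[LHS]addr0 -M3_0 M3_lin !addr0. Qed.

Lemma M3_sub a1 b1 c1 a2 b2 c2 : M3 a1 b1 c1 - M3 a2 b2 c2 =
   M3 (a1 - a2) (b1 - b2) (c1 - c2).
Proof. apply/matrixP => i j; rewrite mxE [X in _ + X]mxE !M3E. by case: ifP; case: ifP => _ _; ring. Qed.

Lemma M3_sum n (a b c : 'I_n -> C) :
  \sum_(i < n) M3 (a i) (b i) (c i) = M3 (\sum_i a i) (\sum_i b i) (\sum_i c i).
Proof.
elim: n a b c => [|n IH] a b c; first by rewrite !big_ord0 M3_0.
by rewrite !big_ord_recr IH /= M3_add.
Qed.

Lemma mkL_M3 (p q r : C -> C) z : mkL p q r z = M3 (p z) (q z) (r z).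
Proof. by []. Qed.

End Dev.

Section Pairs.
Variable R : realType.
Local Notation C := (R[i]).

Definition antisym (q : C -> C) := forall z : C, z != 0 -> q z^-1 = - q z.
Definition pr := ((C -> C) * (C -> C))%type.
Definition good (a : pr) := [/\ laurent a.1, laurent a.2 & antisym a.2].
Definition rep (x : loop R) (a : pr) := forall z, z != 0 -> x z = OA_elt a.1 a.2 z.
Definition pbr (a b : pr) : pr :=
  (fun z => 2%:R * (a.2 z * b.1 z - a.1 z * b.2 z),
   fun z => a.1 z * b.1 z^-1 - a.1 z^-1 * b.1 z).
Definition pscale (c : C) (a : pr) : pr := (fun z => c * a.1 z, fun z => c * a.2 z).
Definition padd (a b : pr) : pr := (fun z => a.1 z + b.1 z, fun z => a.2 z + b.2 z).
Definition pzero : pr := (fun _ => 0, fun _ => 0).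
Definition peq (a b : pr) := forall z, z != 0 -> a.1 z = b.1 z /\ a.2 z = b.2 z.
Definition cong N (a b : pr) := exists g1 g2 : C -> C, [/\ laurent g1, laurent g2 &
  forall z, z != 0 -> a.1 z - b.1 z = (z - 1) ^+ N * g1 z /\ a.2 z - b.2 z = (z - 1) ^+ N * g2 z].

Lemma subr_eqR (x y t : C) : x - y = t -> x = y + t.
Proof. by move<-; rewrite addrC subrK. Qed.

Lemma inv_neq0 (z : C) : z != 0 -> z^-1 != 0.
Proof. by rewrite invr_eq0. Qed.

Lemma sig_fac N (z : C) : z != 0 -> (z^-1 - 1) ^+ N = (z - 1) ^+ N * (- z^-1) ^+ N.
Proof. move=> nz; rewrite -exprMn; congr (_ ^+ _); by field. Qed.

Lemma rep_br x y a b : antisym a.2 -> antisym b.2 -> rep x a -> rep y b ->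
  rep (lbr x y) (pbr a b).
Proof.
move=> aa ab rx ry z nz; rewrite /lbr rx // ry // /OA_elt !mkL_M3 M3_br /pbr /=.
rewrite (aa z nz) (ab z nz); congr M3; ring.
Qed.

Lemma good_br a b : good a -> good b -> good (pbr a b).
Proof.
case=> la1 la2 _ [lb1 lb2 _]; split => /=.
- apply: laurent_scale; apply: laurent_sub; exact: laurent_mul.
- apply: laurent_sub; apply: laurent_mul => //; exact: laurent_sig.
- move=> z nz; rewrite invrK; ring.
Qed.

Lemma rep_scale c x a : rep x a -> rep (lscale c x) (pscale c a).
Proof. by move=> rx z nz; rewrite /lscale rx // /OA_elt !mkL_M3 M3_scale. Qed.

Lemma good_scale c a : good a -> good (pscale c a).
Proof.
case=> l1 l2 an; split => /=; try exact: laurent_scale.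
by move=> z nz; rewrite an // mulrN.
Qed.

Lemma good_add a b : good a -> good b -> good (padd a b).
Proof.
case=> l1 l2 an [m1 m2 bn]; split => /=; try exact: laurent_add.
by move=> z nz; rewrite an // bn // opprD.
Qed.

Lemma good0 : good pzero.
Proof. split => /=; try exact: laurent_const. by move=> z _; rewrite oppr0. Qed.

Lemma in_OA_rep x a : rep x a -> good a -> in_OA x.
Proof. move=> rx [l1 l2 an]; exists a.1, a.2; split => //. Qed.

Lemma qeq_rep N x y a b : rep x a -> rep y b -> good a -> good b -> cong N a b -> qeq N x y.
Proof.
move=> rx ry [la1 la2 an] [lb1 lb2 bn] [g1 [g2 [lg1 lg2 e]]].
exists (fun z => a.1 z - b.1 z), (fun z => a.2 z - b.2 z); split.
- exact: laurent_sub.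
- exact: laurent_sub.
- move=> z nz; rewrite an // bn //; ring.
- split; [exists g1|exists g2]; (split; [done|]) => z nz; by case: (e z nz).
- by move=> z nz; rewrite /lsub rx // ry // /OA_elt !mkL_M3 M3_sub.
Qed.

Lemma peq_cong N a b : peq a b -> cong N a b.
Proof.
move=> e; exists (fun _ => 0), (fun _ => 0); split; try exact: laurent_const.
by move=> z nz; case: (e z nz) => -> ->; rewrite !subrr mulr0.
Qed.

Lemma cong_refl N a : cong N a a.
Proof. by apply: peq_cong. Qed.

Lemma cong_sym N a b : cong N a b -> cong N b a.
Proof.
move=> [g1 [g2 [l1 l2 e]]]; exists (fun z => - g1 z), (fun z => - g2 z); split;
  try exact: laurent_opp.
move=> z nz; case: (e z nz) => /subr_eqR e1 /subr_eqR e2.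
rewrite e1 e2; move: ((z - 1) ^+ N) => S; split; ring.
Qed.

Lemma cong_trans N a b c : cong N a b -> cong N b c -> cong N a c.
Proof.
move=> [g1 [g2 [l1 l2 e]]] [h1 [h2 [m1 m2 f]]];
exists (fun z => g1 z + h1 z), (fun z => g2 z + h2 z); split; try exact: laurent_add.
move=> z nz; case: (e z nz) => /subr_eqR e1 /subr_eqR e2; case: (f z nz) => /subr_eqR f1 /subr_eqR f2.
rewrite e1 e2 f1 f2; move: ((z - 1) ^+ N) => S; split; ring.
Qed.

Lemma cong_add N a b a' b' : cong N a a' -> cong N b b' -> cong N (padd a b) (padd a' b').
Proof.
move=> [g1 [g2 [l1 l2 e]]] [h1 [h2 [m1 m2 f]]];
exists (fun z => g1 z + h1 z), (fun z => g2 z + h2 z); split; try exact: laurent_add.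
move=> z nz; case: (e z nz) => /subr_eqR e1 /subr_eqR e2; case: (f z nz) => /subr_eqR f1 /subr_eqR f2 /=.
rewrite e1 e2 f1 f2; move: ((z - 1) ^+ N) => S; split; ring.
Qed.

Lemma cong_scale N c a a' : cong N a a' -> cong N (pscale c a) (pscale c a').
Proof.
move=> [g1 [g2 [l1 l2 e]]];
exists (fun z => c * g1 z), (fun z => c * g2 z); split; try exact: laurent_scale.
move=> z nz; case: (e z nz) => /subr_eqR e1 /subr_eqR e2 /=.
rewrite e1 e2; move: ((z - 1) ^+ N) => S; split; ring.
Qed.

Lemma cong_br N a b a' b' : good a -> good b -> good a' -> good b' ->
  cong N a a' -> cong N b b' -> cong N (pbr a b) (pbr a' b').
Proof.
move=> [la1 la2 _] [lb1 lb2 _] [la1' la2' _] [lb1' lb2' _]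
  [g1 [g2 [l1 l2 e]]] [h1 [h2 [m1 m2 f]]].
exists (fun z => 2%:R * (g2 z * b.1 z + a'.2 z * h1 z - g1 z * b.2 z - a'.1 z * h2 z)),
  (fun z => g1 z * b.1 z^-1 + a'.1 z * ((- z^-1) ^+ N * h1 z^-1)
            - ((- z^-1) ^+ N * g1 z^-1) * b.1 z - a'.1 z^-1 * h1 z); split.
- apply: laurent_scale; apply: laurent_sub; [apply: laurent_sub|]; [apply: laurent_add| |];
  exact: laurent_mul.
- have lk := laurent_pow N (laurent_opp (laurent_inv R)).
  apply: laurent_sub; [apply: laurent_sub|]; [apply: laurent_add| |];
  apply: laurent_mul => //; try exact: laurent_sig;
  apply: laurent_mul => //; exact: laurent_sig.
move=> z nz; have nz' := inv_neq0 nz.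
case: (e z nz) => /subr_eqR e1 /subr_eqR e2; case: (f z nz) => /subr_eqR f1 /subr_eqR f2.
case: (e _ nz') => /subr_eqR e1' _; case: (f _ nz') => /subr_eqR f1' _.
rewrite sig_fac // in e1' f1'.
rewrite /pbr /= e1 e2 f1 f2 e1' f1'.
move: ((z - 1) ^+ N) ((- z^-1) ^+ N) => S T.
split; ring.
Qed.

End Pairs.

Section Red.
Variable R : realType.
Local Notation C := (R[i]).

Definition wf (z : C) := (z - z^-1) / 2%:R.
Definition vf (z : C) := wf z ^+ 2.
Definition Er j : pr R := (fun z => vf z ^+ j * wf z / 2%:R, fun z => - (vf z ^+ j * wf z / 2%:R)).
Definition Fr j : pr R := (fun z => - (vf z ^+ j * wf z / 2%:R), fun z => - (vf z ^+ j * wf z / 2%:R)).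
Definition Hr j : pr R := (fun z => vf z ^+ j, fun _ => 0).

Lemma two_neq0 : 2%:R != 0 :> C. Proof. by rewrite pnatr_eq0. Qed.

Lemma wf_sig z : z != 0 -> wf z^-1 = - wf z.
Proof. move=> nz; rewrite /wf invrK; ring. Qed.
Lemma vf_sig z : z != 0 -> vf z^-1 = vf z.
Proof. move=> nz; rewrite /vf wf_sig //; ring. Qed.

Lemma laurent_wf : laurent wf.
Proof.
apply: laurent_mul (laurent_sub (laurent_id R) (laurent_inv R)) (laurent_const _).
Qed.
Lemma laurent_vf : laurent vf.
Proof. exact: laurent_pow laurent_wf. Qed.

Lemma laurent_vw j : laurent (fun z => vf z ^+ j * wf z / 2%:R).
Proof. apply: laurent_mul; [apply: laurent_mul; [exact: laurent_pow laurent_vf|exact: laurent_wf]|exact: laurent_const]. Qed.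

Lemma good_Er j : good (Er j).
Proof.
split; [exact: laurent_vw| exact: laurent_opp (laurent_vw j)|].
by move=> z nz /=; rewrite vf_sig // wf_sig //; ring.
Qed.
Lemma good_Fr j : good (Fr j).
Proof.
split; [exact: laurent_opp (laurent_vw j)| exact: laurent_opp (laurent_vw j)|].
by move=> z nz /=; rewrite vf_sig // wf_sig //; ring.
Qed.
Lemma good_Hr j : good (Hr j).
Proof.
split; [exact: laurent_pow laurent_vf| exact: laurent_const|].
by move=> z nz /=; rewrite oppr0.
Qed.

Ltac vsplit j k := rewrite ?exprS ?exprD; move: (vf _ ^+ j) (vf _ ^+ k) => A B.

Lemma br_HE j k : peq (pbr (Hr j) (Er k)) (pscale 2%:R (Er (j + k))).
Proof.
move=> z nz; rewrite /pbr /= vf_sig // wf_sig // exprD.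
move: (vf z ^+ j) (vf z ^+ k) => A B; split; by field.
Qed.
Lemma br_HF j k : peq (pbr (Hr j) (Fr k)) (pscale (- 2%:R) (Fr (j + k))).
Proof.
move=> z nz; rewrite /pbr /= vf_sig // wf_sig // exprD.
move: (vf z ^+ j) (vf z ^+ k) => A B; split; by field.
Qed.
Lemma br_EF j k : peq (pbr (Er j) (Fr k)) (Hr (j + k).+1).
Proof.
move=> z nz; rewrite /pbr /= vf_sig // wf_sig // exprS exprD /vf.
move: (wf z ^+ 2 ^+ j) (wf z ^+ 2 ^+ k) => A B; split; by field.
Qed.
Lemma br_EE j k : peq (pbr (Er j) (Er k)) (pzero R).
Proof.
move=> z nz; rewrite /pbr /= vf_sig // wf_sig //.
move: (vf z ^+ j) (vf z ^+ k) => A B; split; by field.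
Qed.
Lemma br_FF j k : peq (pbr (Fr j) (Fr k)) (pzero R).
Proof.
move=> z nz; rewrite /pbr /= vf_sig // wf_sig //.
move: (vf z ^+ j) (vf z ^+ k) => A B; split; by field.
Qed.

Definition uf (z : C) := (z + 1) / (2%:R * z).
Lemma wf_su z : z != 0 -> wf z = (z - 1) * uf z.
Proof. move=> nz; rewrite /wf /uf; by field; rewrite ?two_neq0 ?nz. Qed.
Lemma laurent_uf : laurent uf.
Proof.
apply: laurent_ext (laurent_mul (laurent_add (laurent_id R) (laurent_const 1))
   (laurent_scale (2%:R^-1) (laurent_inv R))) => z nz.
rewrite /uf; by field; rewrite ?two_neq0 ?nz.
Qed.

Lemma vf_big L m z : (L <= m)%N -> z != 0 ->
  vf z ^+ m = (z - 1) ^+ (L.*2) * ((z - 1) ^+ (m.*2 - L.*2) * uf z ^+ m.*2).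
Proof.
move=> Lm nz; rewrite /vf -exprM wf_su // exprMn mulrA -exprD subnKC ?leq_double //.
by rewrite mul2n.
Qed.

Lemma cong_Er0 L m : (L <= m)%N -> cong L.*2 (Er m) (pzero R).
Proof.
move=> Lm; exists (fun z => (z - 1) ^+ (m.*2 - L.*2) * uf z ^+ m.*2 * wf z / 2%:R),
  (fun z => - ((z - 1) ^+ (m.*2 - L.*2) * uf z ^+ m.*2 * wf z / 2%:R)); split.
- apply: laurent_mul; [apply: laurent_mul; [apply: laurent_mul|]|]; try exact: laurent_pow laurent_uf.
  + exact: laurent_pow (laurent_sub (laurent_id R) (laurent_const 1)).
  + exact: laurent_wf.
  + exact: laurent_const.
- apply: laurent_opp; apply: laurent_mul; [apply: laurent_mul; [apply: laurent_mul|]|]; try exact: laurent_pow laurent_uf.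
  + exact: laurent_pow (laurent_sub (laurent_id R) (laurent_const 1)).
  + exact: laurent_wf.
  + exact: laurent_const.
move=> z nz /=; rewrite !subr0 (vf_big Lm nz); split; ring.
Qed.

Lemma cong_Fr0 L m : (L <= m)%N -> cong L.*2 (Fr m) (pzero R).
Proof.
move=> Lm; have [g1 [g2 [l1 l2 e]]] := cong_Er0 Lm.
exists (fun z => - g1 z), g2; split => //; first exact: laurent_opp.
move=> z nz; case: (e z nz) => /= e1 e2; rewrite !subr0 in e1 e2 *; split => //.
by rewrite e1 mulrN.
Qed.

Lemma cong_Hr0 L m : (L <= m)%N -> cong L.*2 (Hr m) (pzero R).
Proof.
move=> Lm; exists (fun z => (z - 1) ^+ (m.*2 - L.*2) * uf z ^+ m.*2), (fun _ => 0); split.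
- apply: laurent_mul; last exact: laurent_pow laurent_uf.
  exact: laurent_pow (laurent_sub (laurent_id R) (laurent_const 1)).
- exact: laurent_const.
move=> z nz /=; rewrite !subr0 (vf_big Lm nz); split; ring.
Qed.

End Red.

Section Act.
Variable R : realType.
Local Notation C := (R[i]).

Lemma M3_sums (r : seq nat) (a b c : nat -> C) :
  \sum_(i <- r) M3 (a i) (b i) (c i) = M3 (\sum_(i <- r) a i) (\sum_(i <- r) b i) (\sum_(i <- r) c i).
Proof.
elim: r => [|x r IH]; first by rewrite !big_nil M3_0.
by rewrite !big_cons IH M3_add.
Qed.

Lemma laurent_sums (r : seq nat) (f : nat -> C -> C) : (forall i, laurent (f i)) ->
  laurent (fun z => \sum_(i <- r) f i z).
Proof.
move=> h; elim: r => [|x r IH].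
  apply: laurent_ext (laurent_const 0) => z _; by rewrite big_nil.
apply: laurent_ext (laurent_add (h x) IH) => z _; by rewrite big_cons.
Qed.

Lemma peq_scale c (a b : pr R) : peq a b -> peq (pscale c a) (pscale c b).
Proof. by move=> e z nz; case: (e z nz) => /= -> ->. Qed.

Lemma cong_peq N (a b c : pr R) : cong N a b -> peq b c -> cong N a c.
Proof. move=> h e; apply: cong_trans h (peq_cong _ e). Qed.

Lemma peq_br (a b a' b' : pr R) : peq a a' -> peq b b' -> peq (pbr a b) (pbr a' b').
Proof.
move=> e f z nz; case: (e z nz) => /= -> ->; case: (f z nz) => -> ->.
by case: (f _ (inv_neq0 nz)) => -> _; case: (e _ (inv_neq0 nz)) => -> _.
Qed.

Variable l : nat.

Definition Sp (z : C) := 2%:R * (z - 1) ^+ 1 - \sum_(1 <= k < (2 * l)%N) (-1) ^+ k * (2%:R * (z - 1) ^+ k).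
Definition yf (z : C) := (-1) ^+ 1 * ((z - 1) ^+ 1 - (z^-1 - 1) ^+ 1).
Definition Ep0 : pr R := (fun z => (8%:R)^-1 * Sp z, fun z => (4%:R)^-1 * yf z).
Definition Fp0 : pr R := (fun z => - ((8%:R)^-1 * Sp z), fun z => (4%:R)^-1 * yf z).
Definition H1p := pbr Ep0 Fp0.
Definition H0p : pr R := (fun _ => 1, fun _ => 0).
Fixpoint Ep j := if j is j'.+1 then pscale (2%:R)^-1 (pbr H1p (Ep j')) else Ep0.
Fixpoint Fp j := if j is j'.+1 then pscale (- (2%:R)^-1) (pbr H1p (Fp j')) else Fp0.
Definition Hp m := if m is m'.+1 then pbr (Ep (minn m' l.-1)) (Fp (m' - minn m' l.-1)) else H0p.

Lemma rep_Ssum z : Ssum R l z = M3 (Sp z) (Sp z^-1) 0.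
Proof.
rewrite /Ssum (eq_bigr (fun k => M3 ((-1) ^+ k * (2%:R * (z - 1) ^+ k))
   ((-1) ^+ k * (2%:R * (z^-1 - 1) ^+ k)) ((-1) ^+ k * 0))); last first.
  by move=> k _; rewrite /X mkL_M3 M3_scale.
rewrite M3_sums /X mkL_M3 M3_sub; congr M3; rewrite big1 ?subr0 // => k _; by rewrite mulr0.
Qed.

Lemma rep_E0 : rep (E0 R l) Ep0.
Proof.
move=> z nz; rewrite /E0 rep_Ssum /Y mkL_M3 !M3_scale M3_add /OA_elt mkL_M3 /=.
congr M3; rewrite /yf; ring.
Qed.

Lemma rep_F0 : rep (F0 R l) Fp0.
Proof.
move=> z nz; rewrite /F0 rep_Ssum /Y mkL_M3 !M3_scale M3_sub /OA_elt mkL_M3 /=.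
congr M3; rewrite /yf; ring.
Qed.

Lemma rep_H0 : rep (H0 R) H0p.
Proof.
move=> z nz; rewrite /H0 /lscale /X mkL_M3 M3_scale /OA_elt mkL_M3 /= !expr0 mulr1 mulVf ?two_neq0 //.
by rewrite mulr0.
Qed.

Lemma Sp_eq z : (0 < l)%N -> z != 0 -> Sp z = 4%:R * wf z + 2%:R * (z - 1) ^+ (2 * l) / z.
Proof.
move=> lp nz; rewrite /Sp.
set N := (2 * l)%N.
have N0 : (0 < N)%N by rewrite /N muln_gt0.
have e0 := @big_ltn C 0 +%R 0%N N (fun k => (-1) ^+ k * (2%:R * (z - 1) ^+ k)) N0.
have e1 : \sum_(0 <= k < N) (-1) ^+ k * (2%:R * (z - 1) ^+ k) =
   2%:R * \sum_(k < N) (1 - z) ^+ k.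
  rewrite big_mkord mulr_sumr; apply: eq_bigr => k _.
  by rewrite mulrCA -exprMn mulN1r opprB.
have e2 := subrX1 (1 - z) N.
have e3 : (1 - z) ^+ N = (z - 1) ^+ N.
  by rewrite /N exprM [in RHS]exprM; congr (_ ^+ _); ring.
rewrite e1 in e0; rewrite e3 in e2.
have hz : 1 - z - 1 = - z by ring.
rewrite hz in e2.
move: (\sum_(1 <= k < N) (-1) ^+ k * (2%:R * (z - 1) ^+ k)) (\sum_(k < N) (1 - z) ^+ k) ((z - 1) ^+ N) e0 e2
  => S1 Sg S e0 e2.
have -> : S1 = 2%:R * Sg - 2%:R by rewrite e0 !expr0 mulr1 mul1r; ring.
have -> : Sg = (1 - S) / z.
  have -> : 1 - S = z * Sg by rewrite -[1 - S]opprB e2; ring.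
  by field.
rewrite /wf; by field; rewrite ?two_neq0.
Qed.

Hypothesis hl : (0 < l)%N.
Local Notation L := (2 * l)%N.

Lemma laurent_Sp : laurent Sp.
Proof.
have h : laurent (fun z : C => 4%:R * wf z + 2%:R * (z - 1) ^+ L / z).
  apply: laurent_add; first exact: laurent_scale _ (laurent_wf R).
  apply: laurent_mul; last exact: laurent_inv R.
  apply: laurent_scale; apply: laurent_pow; apply: laurent_sub; [exact: laurent_id|exact: laurent_const].
apply: laurent_ext h => z nz; by rewrite Sp_eq.
Qed.

Lemma laurent_yf : laurent yf.
Proof.
apply: laurent_scale; apply: laurent_sub; apply: laurent_pow;
  apply: laurent_sub; try exact: laurent_const; [exact: laurent_id|exact: laurent_inv].
Qed.

Lemma anti_yf : antisym yf.
Proof. move=> z nz; rewrite /yf invrK; ring. Qed.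

Lemma good_Ep0 : good Ep0.
Proof.
split; [exact: laurent_scale _ laurent_Sp|exact: laurent_scale _ laurent_yf|].
by move=> z nz /=; rewrite anti_yf // mulrN.
Qed.
Lemma good_Fp0 : good Fp0.
Proof.
split; [exact: laurent_opp (laurent_scale _ laurent_Sp)|exact: laurent_scale _ laurent_yf|].
by move=> z nz /=; rewrite anti_yf // mulrN.
Qed.
Lemma good_H1p : good H1p.
Proof. exact: good_br good_Ep0 good_Fp0. Qed.
Lemma good_H0p : good H0p.
Proof. split; try exact: laurent_const. by move=> z _ /=; rewrite oppr0. Qed.
Lemma good_Ep j : good (Ep j).
Proof. elim: j => [|j IH]; [exact: good_Ep0|exact: good_scale (good_br good_H1p IH)]. Qed.
Lemma good_Fp j : good (Fp j).
Proof. elim: j => [|j IH]; [exact: good_Fp0|exact: good_scale (good_br good_H1p IH)]. Qed.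
Lemma good_Hp m : good (Hp m).
Proof. case: m => [|m]; [exact: good_H0p|exact: good_br (good_Ep _) (good_Fp _)]. Qed.

Lemma rep_H1 : rep (H1 R l) H1p.
Proof. have [_ _ a] := good_Ep0; have [_ _ b] := good_Fp0; exact: rep_br a b rep_E0 rep_F0. Qed.

Lemma rep_E j : rep (E R l j) (Ep j).
Proof.
elim: j => [|j IH]; first exact: rep_E0.
have [_ _ a] := good_H1p; have [_ _ b] := good_Ep j.
apply: rep_scale; exact: rep_br a b rep_H1 IH.
Qed.
Lemma rep_F j : rep (F R l j) (Fp j).
Proof.
elim: j => [|j IH]; first exact: rep_F0.
have [_ _ a] := good_H1p; have [_ _ b] := good_Fp j.
apply: rep_scale; exact: rep_br a b rep_H1 IH.
Qed.
Lemma rep_H m : rep (H R l m) (Hp m).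
Proof.
case: m => [|m]; first exact: rep_H0.
have [_ _ a] := good_Ep (minn m l.-1); have [_ _ b] := good_Fp (m - minn m l.-1).
exact: rep_br a b (rep_E _) (rep_F _).
Qed.

Lemma cong_E0 : cong L Ep0 (Er R 0).
Proof.
exists (fun z => (4%:R)^-1 * z^-1), (fun _ => 0); split.
- exact: laurent_scale _ (laurent_inv R).
- exact: laurent_const.
move=> z nz /=; rewrite Sp_eq // expr0 /yf /wf; move: ((z - 1) ^+ L) => S.
by split; field.
Qed.

Lemma cong_F0 : cong L Fp0 (Fr R 0).
Proof.
exists (fun z => - ((4%:R)^-1 * z^-1)), (fun _ => 0); split.
- exact: laurent_opp (laurent_scale _ (laurent_inv R)).
- exact: laurent_const.
move=> z nz /=; rewrite Sp_eq // expr0 /yf /wf; move: ((z - 1) ^+ L) => S.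
by split; field.
Qed.

Lemma cong_H1 : cong L H1p (Hr R 1).
Proof.
apply: cong_peq (br_EF 0 0).
exact: cong_br good_Ep0 good_Fp0 (good_Er _ _) (good_Fr _ _) cong_E0 cong_F0.
Qed.

Lemma cong_Ep j : cong L (Ep j) (Er R j).
Proof.
elim: j => [|j IH]; first exact: cong_E0.
apply: cong_trans (cong_scale _ (cong_br good_H1p (good_Ep j) (good_Hr _ 1) (good_Er _ j) cong_H1 IH)) _.
apply: peq_cong; move=> z nz.
case: (br_HE 1 j nz) => /= -> ->; rewrite add1n.
split; rewrite mulrA mulVf ?mul1r //; exact: two_neq0.
Qed.

Lemma cong_Fp j : cong L (Fp j) (Fr R j).
Proof.
elim: j => [|j IH]; first exact: cong_F0.
apply: cong_trans (cong_scale _ (cong_br good_H1p (good_Fp j) (good_Hr _ 1) (good_Fr _ j) cong_H1 IH)) _.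
apply: peq_cong; move=> z nz.
case: (br_HF 1 j nz) => /= -> ->; rewrite add1n.
split; rewrite mulrA mulrNN mulVf ?mul1r //; exact: two_neq0.
Qed.

Lemma cong_Hp m : cong L (Hp m) (Hr R m).
Proof.
case: m => [|m].
  apply: peq_cong => z nz /=; by rewrite expr0.
rewrite /=; apply: cong_peq (cong_br (good_Ep _) (good_Fp _) (good_Er _ _) (good_Fr _ _)
   (cong_Ep _) (cong_Fp _)) _.
have := br_EF (R:=R) (minn m l.-1) (m - minn m l.-1); by rewrite subnKC ?geq_minl.
Qed.

End Act.

Section Span.
Variable R : realType.
Local Notation C := (R[i]).

Lemma one_step N (g : C -> C) : laurent g -> exists c (g' : C -> C), laurent g' /\
  forall z, z != 0 -> (z - 1) ^+ N * g z = c * wf z ^+ N + (z - 1) ^+ N.+1 * g' z.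
Proof.
move=> [G [m hg]].
set c := G.[1].
have : root (G - c *: 'X^m) 1 by rewrite /root hornerD hornerN hornerZ hornerXn expr1n mulr1 subrr.
move/factor_theorem => [Q eQ].
pose k := fun z : C => (2%:R * z)^-1 * \sum_(i < N) uf z ^+ i.
have lk : laurent k.
  apply: laurent_mul.
    apply: laurent_ext (laurent_scale (2%:R^-1) (laurent_inv R)) => z nz; by rewrite invfM mulrC.
  exact: laurent_sum (fun i => laurent_pow i (laurent_uf R)).
exists c, (fun z => c * k z + Q.[z] / z ^+ m); split.
  apply: laurent_add; first exact: laurent_scale.
  apply: laurent_ext (laurent_mul (laurent_poly Q) (laurent_pow m (laurent_inv R))) => z _; by rewrite exprVn.
move=> z nz.
have eg : g z = c + (z - 1) * (Q.[z] / z ^+ m).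
  have := congr1 (fun P => P.[z]) eQ; rewrite /= hornerD hornerN hornerZ hornerXn hornerM hornerD hornerN hornerX hornerC.
  move/subr_eqR => eG; rewrite hg // eG.
  have hm := expf_neq0 m nz; move: (z ^+ m) hm => M hm; by field.
have ew : wf z ^+ N = (z - 1) ^+ N - (z - 1) * (z - 1) ^+ N * k z.
  have e1 := subrX1 (uf z) N.
  rewrite wf_su // exprMn (subr_eqR e1) /k.
  have eu : uf z - 1 = - (z - 1) / (2%:R * z) by rewrite /uf; field; rewrite ?two_neq0 ?nz.
  rewrite eu; move: (\sum_(i < N) uf z ^+ i) ((z - 1) ^+ N) => Sg S.
  by field; rewrite ?two_neq0 ?nz.
rewrite eg ew exprS; move: ((z - 1) ^+ N) (k z) => S K; ring.
Qed.

Lemma expand n (p : C -> C) : laurent p -> exists (al be : nat -> C) (g : C -> C), laurent g /\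
  forall z, z != 0 -> p z = \sum_(j < n) (al j * vf z ^+ j + be j * (vf z ^+ j * wf z))
     + (z - 1) ^+ (n.*2) * g z.
Proof.
move=> lp; elim: n => [|n [al [be [g [lg e]]]]].
  exists (fun _ => 0), (fun _ => 0), p; split => // z nz; by rewrite big_ord0 expr0 add0r mul1r.
have [c1 [g1 [lg1 e1]]] := one_step (n.*2) lg.
have [c2 [g2 [lg2 e2]]] := one_step (n.*2.+1) lg1.
exists (fun j => if j == n then c1 else al j), (fun j => if j == n then c2 else be j), g2.
split => // z nz.
rewrite big_ord_recr /= eqxx.
rewrite (eq_bigr (fun j : 'I_n => al j * vf z ^+ j + be j * (vf z ^+ j * wf z))); last first.
  by move=> j _; rewrite ltn_eqF.
rewrite e // e1 // e2 // doubleS /vf -exprM mul2n -exprSr.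
move: (\sum_(j < n) _) (wf z ^+ n.*2) (wf z ^+ n.*2.+1) ((z - 1) ^+ n.*2.+2) => A B D S.
ring.
Qed.

Lemma expand_odd n (q : C -> C) : laurent q -> antisym q -> exists (be : nat -> C) (g : C -> C),
  laurent g /\ forall z, z != 0 -> q z = \sum_(j < n) be j * (vf z ^+ j * wf z) + (z - 1) ^+ (n.*2) * g z.
Proof.
move=> lq aq; have [al [be [g [lg e]]]] := expand n lq.
exists be, (fun z => (g z - (- z^-1) ^+ n.*2 * g z^-1) / 2%:R); split.
  apply: laurent_mul; last exact: laurent_const.
  apply: laurent_sub => //; apply: laurent_mul; last exact: laurent_sig.
  exact: laurent_pow (laurent_opp (laurent_inv R)).
move=> z nz; have nz' := inv_neq0 nz.
have ei := e _ nz'; rewrite aq // sig_fac // in ei.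
rewrite (eq_bigr (fun j : 'I_n => al j * vf z ^+ j - be j * (vf z ^+ j * wf z))) in ei; last first.
  by move=> j _; rewrite vf_sig // wf_sig //; ring.
have ez := e _ nz.
have -> : q z = (q z - - q z) / 2%:R by rewrite opprK; field; rewrite ?two_neq0.
rewrite {1}ez ei.
have -> : \sum_(j < n) be j * (vf z ^+ j * wf z) =
  (\sum_(j < n) (al j * vf z ^+ j + be j * (vf z ^+ j * wf z)) -
   \sum_(j < n) (al j * vf z ^+ j - be j * (vf z ^+ j * wf z))) / 2%:R.
  rewrite -sumrB mulr_suml; apply: eq_bigr => j _; by field; rewrite ?two_neq0.
move: (\sum_(j < n) _) (\sum_(j < n) _) ((z - 1) ^+ n.*2) ((- z^-1) ^+ n.*2) => A B S T.
by field; rewrite ?two_neq0.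
Qed.

Lemma poly_zero (P : {poly C}) : (forall z, z != 0 -> P.[z] = 0) -> P = 0.
Proof.
move=> h; apply/eqP; apply/negPn/negP => nP.
set rs := [seq (i.+1)%:R : C | i <- iota 0 (size P)].
have h1 : all (root P) rs.
  apply/allP => x /mapP [i _ ->]; by rewrite /root h // pnatr_eq0.
have h2 : uniq rs.
  rewrite map_inj_uniq ?iota_uniq // => i j /eqP; by rewrite eqr_nat => /eqP [].
have := max_poly_roots nP h1 h2.
by rewrite size_map size_iota ltnn.
Qed.

Lemma poly_indep N (ga : nat -> C) (A : nat -> {poly C}) (Q : {poly C}) :
  (forall i, (i < N)%N -> (A i).[1] != 0) ->
  \sum_(i < N) ga i *: (('X - 1%:P) ^+ i * A i) = ('X - 1%:P) ^+ N * Q ->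
  forall i, (i < N)%N -> ga i = 0.
Proof.
elim: N ga A Q => [|N IH] ga A Q hA e i iN; first by [].
rewrite big_ord_recl /= expr0 mul1r in e.
have g0 : ga 0%N = 0.
  have := congr1 (fun P => P.[1]) e; rewrite /= hornerD horner_sum hornerZ.
  rewrite big1; last by move=> j _; rewrite hornerZ hornerM horner_exp hornerXsubC subrr expr0n /= mul0r mulr0.
  rewrite hornerM horner_exp hornerXsubC subrr expr0n /= mul0r addr0 => /eqP.
  by rewrite mulf_eq0 (negbTE (hA 0%N isT)) orbF => /eqP.
case: i iN => [//|i iN].
apply: (IH (fun i => ga i.+1) (fun i => A i.+1) Q) => //.
  by move=> j jN; apply: hA.
rewrite g0 scale0r add0r in e.
have hX : ('X - 1%:P : {poly C}) != 0 by rewrite -size_poly_eq0 size_XsubC.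
apply: (mulfI hX); rewrite mulrA -exprS -e mulr_sumr; apply: eq_bigr => j _.
by rewrite /bump leq0n add1n -scalerAr mulrA -exprS.
Qed.

Lemma indep1 N (ga : nat -> C) (g : C -> C) : laurent g ->
  (forall z, z != 0 -> \sum_(i < N) ga i * wf z ^+ i = (z - 1) ^+ N * g z) ->
  forall i, (i < N)%N -> ga i = 0.
Proof.
move=> [G [m hg]] e.
pose A i := ('X + 1%:P) ^+ i * (2%:R *: 'X) ^+ (N - i) * 'X^m : {poly C}.
apply: (@poly_indep N ga A (G * (2%:R *: 'X) ^+ N)).
  move=> i _; rewrite !hornerM !horner_exp hornerD hornerX hornerC hornerZ hornerX.
  have h2 : (1 + 1 : C) != 0 by rewrite -[X in X != 0]/(2%:R) pnatr_eq0.
  by rewrite expr1n !mulr1 !mulf_neq0 ?expf_neq0 ?two_neq0.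
apply/eqP; rewrite -subr_eq0; apply/eqP; apply: poly_zero => z nz.
rewrite hornerD hornerN horner_sum.
rewrite (eq_bigr (fun i : 'I_N => ga i * wf z ^+ i * ((2%:R * z) ^+ N * z ^+ m))); last first.
  move=> i _; rewrite hornerZ /A !hornerM !horner_exp hornerXsubC hornerD hornerX hornerC hornerZ hornerX.
  have eN : (2%:R * z) ^+ N = (2%:R * z) ^+ i * (2%:R * z) ^+ (N - i).
    by rewrite -exprD subnKC // ltnW.
  have ew : wf z ^+ i = (z - 1) ^+ i * (z + 1) ^+ i / (2%:R * z) ^+ i.
    by rewrite -exprMn -expr_div_n; congr (_ ^+ _); rewrite /wf; field; rewrite ?two_neq0 ?nz.
  rewrite eN ew; have h2z : (2%:R * z) ^+ i != 0 by rewrite expf_neq0 // mulf_neq0 ?two_neq0.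
  move: ((z - 1) ^+ i) ((z + 1) ^+ i) ((2%:R * z) ^+ i) ((2%:R * z) ^+ (N - i)) (z ^+ m) h2z => a b c d f hc.
  by field.
rewrite -mulr_suml e // hornerM horner_exp hornerXsubC hornerM horner_exp hornerZ hornerX hg //.
have hm := expf_neq0 m nz; move: (z ^+ m) ((z - 1) ^+ N) ((2%:R * z) ^+ N) hm => M S T hm.
by field.
Qed.

Lemma sum_double n (f : nat -> C) :
  \sum_(i < n.*2) f i = \sum_(j < n) (f j.*2 + f j.*2.+1).
Proof.
elim: n => [|n IH]; first by rewrite !big_ord0.
by rewrite doubleS big_ord_recr big_ord_recr [in RHS]big_ord_recr IH /= addrA.
Qed.

Lemma indep2 n (al be : nat -> C) (g : C -> C) : laurent g ->
  (forall z, z != 0 -> \sum_(j < n) (al j * vf z ^+ j + be j * (vf z ^+ j * wf z)) = (z - 1) ^+ (n.*2) * g z) ->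
  forall j, (j < n)%N -> al j = 0 /\ be j = 0.
Proof.
move=> lg e.
pose ga i := if odd i then be i./2 else al i./2.
have h := @indep1 n.*2 ga g lg.
have {}h : forall i, (i < n.*2)%N -> ga i = 0.
  apply: h => z nz; rewrite -e // (sum_double n (fun i => ga i * wf z ^+ i)); apply: eq_bigr => j _.
  rewrite /ga /= odd_double /= uphalf_double half_double /vf -exprM mul2n -exprSr //.
move=> j jn; split.
  have := h j.*2; rewrite /ga odd_double half_double; apply; by rewrite ltn_double.
have := h j.*2.+1; rewrite /ga /= odd_double /= uphalf_double; apply; lia.
Qed.

End Span.

Section Final.
Variable R : realType.
Local Notation C := (R[i]).
Variable l : nat.
Hypothesis hl : (0 < l)%N.
Local Notation L := (2 * l)%N.

Lemma qeq_via x y (a b c : pr R) : rep x a -> rep y b -> good a -> good b ->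
  cong L a c -> cong L b c -> qeq L x y.
Proof. move=> rx ry ga gb ca cb; apply: qeq_rep rx ry ga gb (cong_trans ca (cong_sym cb)). Qed.

Lemma rep_zero : rep (lzero R) (pzero R).
Proof. by move=> z nz; rewrite /lzero /OA_elt mkL_M3 M3_0. Qed.

Definition psumn n (f : nat -> pr R) : pr R :=
  (fun z => \sum_(j < n) (f j).1 z, fun z => \sum_(j < n) (f j).2 z).
Definition psum := psumn l.

Lemma cong_psumn n (f g : nat -> pr R) : (forall j, cong L (f j) (g j)) -> cong L (psumn n f) (psumn n g).
Proof.
move=> h; rewrite /psumn; elim: n => [|n IH].
  by apply: peq_cong => z nz /=; rewrite !big_ord0.
have [g1 [g2 [l1 l2 e]]] := IH; have [h1 [h2 [m1 m2 f']]] := h n.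
exists (fun z => g1 z + h1 z), (fun z => g2 z + h2 z); split; try exact: laurent_add.
move=> z nz /=; rewrite !big_ord_recr /=.
case: (e z nz) => /= /subr_eqR e1 /subr_eqR e2; case: (f' z nz) => /subr_eqR f1 /subr_eqR f2.
rewrite e1 e2 f1 f2; move: ((z - 1) ^+ L) => S; split; ring.
Qed.

Lemma cong_psum (f g : nat -> pr R) : (forall j, cong L (f j) (g j)) -> cong L (psum f) (psum g).
Proof. exact: cong_psumn. Qed.

Lemma good_psum (f : nat -> pr R) : (forall j, good (f j)) -> good (psum f).
Proof.
move=> h; rewrite /psum /psumn; split => /=.
- apply: (@laurent_sum _ l (fun i => (f i).1)) => i; by case: (h i).
- apply: (@laurent_sum _ l (fun i => (f i).2)) => i; by case: (h i).
- move=> z nz; rewrite -sumrN; apply: eq_bigr => i _; by case: (h i) => _ _ ->.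
Qed.

Definition lc (X Y Z : nat -> pr R) (a b c : nat -> C) :=
  psum (fun j => padd (padd (pscale (a j) (X j)) (pscale (b j) (Y j))) (pscale (c j) (Z j))).

Lemma rep_lincomb a b c : rep (lincomb R l a b c) (lc (Ep R l) (Fp R l) (Hp R l) a b c).
Proof.
move=> z nz; rewrite /lincomb.
rewrite (eq_bigr (fun j : 'I_l => M3
   (a j * (Ep R l j).1 z + b j * (Fp R l j).1 z + c j * (Hp R l j).1 z)
   (a j * (Ep R l j).1 z^-1 + b j * (Fp R l j).1 z^-1 + c j * (Hp R l j).1 z^-1)
   (a j * (Ep R l j).2 z + b j * (Fp R l j).2 z + c j * (Hp R l j).2 z))); last first.
  move=> j _; by rewrite (rep_E hl j nz) (rep_F hl j nz) (rep_H hl j nz) /OA_elt !mkL_M3 !M3_scale !M3_add.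
by rewrite M3_sum /OA_elt mkL_M3.
Qed.

Lemma cong_EF j k : cong L (pbr (Ep R l j) (Fp R l k)) (Hr R (j + k).+1).
Proof.
exact: cong_peq (cong_br (good_Ep R hl j) (good_Fp R hl k) (good_Er R j) (good_Fr R k)
  (cong_Ep R hl j) (cong_Fp R hl k)) (br_EF j k).
Qed.
Lemma cong_HE j k : cong L (pbr (Hp R l j) (Ep R l k)) (pscale 2%:R (Er R (j + k))).
Proof.
exact: cong_peq (cong_br (good_Hp R hl j) (good_Ep R hl k) (good_Hr R j) (good_Er R k)
  (cong_Hp R hl j) (cong_Ep R hl k)) (br_HE j k).
Qed.
Lemma cong_HF j k : cong L (pbr (Hp R l j) (Fp R l k)) (pscale (- 2%:R) (Fr R (j + k))).
Proof.
exact: cong_peq (cong_br (good_Hp R hl j) (good_Fp R hl k) (good_Hr R j) (good_Fr R k)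
  (cong_Hp R hl j) (cong_Fp R hl k)) (br_HF j k).
Qed.
Lemma cong_EE j k : cong L (pbr (Ep R l j) (Ep R l k)) (pzero R).
Proof.
exact: cong_peq (cong_br (good_Ep R hl j) (good_Ep R hl k) (good_Er R j) (good_Er R k)
  (cong_Ep R hl j) (cong_Ep R hl k)) (br_EE j k).
Qed.
Lemma cong_FF j k : cong L (pbr (Fp R l j) (Fp R l k)) (pzero R).
Proof.
exact: cong_peq (cong_br (good_Fp R hl j) (good_Fp R hl k) (good_Fr R j) (good_Fr R k)
  (cong_Fp R hl j) (cong_Fp R hl k)) (br_FF j k).
Qed.
Lemma cong_Er0' m : (l <= m)%N -> cong L (Er R m) (pzero R).
Proof. by rewrite mul2n; exact: cong_Er0. Qed.
Lemma cong_Fr0' m : (l <= m)%N -> cong L (Fr R m) (pzero R).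
Proof. by rewrite mul2n; exact: cong_Fr0. Qed.
Lemma cong_Hr0' m : (l <= m)%N -> cong L (Hr R m) (pzero R).
Proof. by rewrite mul2n; exact: cong_Hr0. Qed.

Lemma good_lc (X Y Z : nat -> pr R) a b c : (forall j, good (X j)) -> (forall j, good (Y j)) ->
  (forall j, good (Z j)) -> good (lc X Y Z a b c).
Proof.
move=> gx gy gz; apply: good_psum => j.
apply: good_add; [apply: good_add|]; exact: good_scale.
Qed.

Lemma cong_lc a b c : cong L (lc (Ep R l) (Fp R l) (Hp R l) a b c) (lc (Er R) (Fr R) (Hr R) a b c).
Proof.
apply: cong_psum => j; apply: cong_add; [apply: cong_add|]; apply: cong_scale;
  [exact: cong_Ep|exact: cong_Fp|exact: cong_Hp].
Qed.

Lemma span x : in_OA x -> exists a b c : nat -> C, qeq L x (lincomb R l a b c).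
Proof.
move=> [p [q [lp lq aq ex]]].
have [al [be [gp [lgp ep]]]] := expand l lp.
have [be' [gq [lgq eq]]] := expand_odd l lq aq.
exists (fun j => be j - be' j), (fun j => - be j - be' j), al.
have gpq : good (p, q) by split.
apply: (qeq_via (a := (p, q)) (c := lc (Er R) (Fr R) (Hr R) (fun j => be j - be' j) (fun j => - be j - be' j) al)).
- move=> z nz; exact: ex.
- exact: rep_lincomb.
- exact: gpq.
- apply: good_lc; [exact: good_Ep|exact: good_Fp|exact: good_Hp].
- exists gp, gq; split => // z nz; rewrite /= ep // eq // mul2n /lc /psum /psumn /=; split.
  + rewrite addrAC -sumrB big1 ?add0r // => j _ /=; by field.
  + rewrite addrAC -sumrB big1 ?add0r // => j _ /=; by field.
- exact: cong_lc.
Qed.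

Lemma ab0 (x y : C) : (x - y) / 2%:R = 0 -> - (x + y) / 2%:R = 0 -> x = 0 /\ y = 0.
Proof.
move=> h1 h2.
have ea : x = (x - y) / 2%:R - (- (x + y) / 2%:R) by field.
have eb : y = - ((x - y) / 2%:R) - (- (x + y) / 2%:R) by field.
by split; [rewrite {1}ea|rewrite {1}eb]; rewrite h1 h2 ?oppr0 ?subrr ?addr0.
Qed.

Lemma indep a b c : in_I L (lincomb R l a b c) -> forall j, (j < l)%N -> [/\ a j = 0, b j = 0 & c j = 0].
Proof.
move=> [p [q [lp lq aq [[gp [lgp dp]] [gq [lgq dq]]] ex]]].
have c2 : cong L (lc (Ep R l) (Fp R l) (Hp R l) a b c) (pzero R).
  exists gp, gq; split => // z nz.
  have := rep_lincomb a b c nz; rewrite ex // /OA_elt !mkL_M3 => /M3_inj [e1 _ e3].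
  by rewrite -e1 -e3 /= !subr0; split; [exact: dp|exact: dq].
have [g1 [g2 [l1 l2 e]]] := cong_trans (cong_sym (cong_lc a b c)) c2.
have h1 := @indep2 _ l c (fun j => (a j - b j) / 2%:R) g1 l1.
have h2 := @indep2 _ l (fun _ => 0) (fun j => - (a j + b j) / 2%:R) g2 l2.
have {}h1 : forall j, (j < l)%N -> c j = 0 /\ (a j - b j) / 2%:R = 0.
  apply: h1 => z nz; rewrite -mul2n; case: (e z nz) => e1 _; rewrite subr0 in e1.
  rewrite -e1 /lc /psum /psumn /=; apply: eq_bigr => j _ /=; by field.
have {}h2 : forall j, (j < l)%N -> 0 = 0 :> C /\ - (a j + b j) / 2%:R = 0.
  apply: h2 => z nz; rewrite -mul2n; case: (e z nz) => _ e2; rewrite subr0 in e2.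
  rewrite -e2 /lc /psum /psumn /=; apply: eq_bigr => j _ /=; by field.
move=> j jl; have [hc hab] := h1 j jl; have [_ hab'] := h2 j jl.
have [-> ->] := ab0 hab hab'; by [].
Qed.

Lemma rbr x y (a b : pr R) : rep x a -> rep y b -> good a -> good b -> rep (lbr x y) (pbr a b).
Proof. move=> rx ry [_ _ aa] [_ _ ab]; exact: rep_br aa ab rx ry. Qed.

End Final.

Theorem theorem4 (R : realType) (l : nat) :
  (1 <= l)%N ->
  let L := (2 * l)%N in
  (* (i) *)
  ((forall j k : nat, (j.+2 <= l)%N -> (1 <= k)%N -> (k.+1 <= l)%N ->
      qeq L (lbr (E R l j.+1) (F R l k.-1)) (lbr (E R l j) (F R l k))) /\
   (forall j k : nat, (j < l)%N -> (k < l)%N ->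
      qeq L (lbr (E R l j) (F R l k)) (H R l (j + k).+1)) /\
   qeq L (H R l 1) (H1 R l)) /\
  (* (ii) *)
  ((forall j : nat, (j < l)%N ->
      [/\ in_OA (E R l j), in_OA (F R l j) & in_OA (H R l j)]) /\
   (forall x : loop R, in_OA x ->
      exists a b c : nat -> R[i], qeq L x (lincomb R l a b c)) /\
   (forall a b c : nat -> R[i], in_I L (lincomb R l a b c) ->
      forall j : nat, (j < l)%N -> [/\ a j = 0, b j = 0 & c j = 0]) /\
   (forall m : nat, (l <= m)%N -> (m <= L - 1)%N -> qeq L (H R l m) (lzero R))) /\
  (* (iii) *)
  (forall j k : nat, (j < l)%N -> (k < l)%N ->
     [/\ qeq L (lbr (E R l j) (F R l k)) (Hz R l (j + k).+1),
         qeq L (lbr (H R l j) (E R l k)) (lscale 2%:R (Ez R l (j + k))),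
         qeq L (lbr (H R l j) (F R l k)) (lscale (- 2%:R) (Fz R l (j + k))),
         qeq L (lbr (E R l j) (E R l k)) (lzero R) &
         qeq L (lbr (F R l j) (F R l k)) (lzero R)]).
Proof.
move=> hl L; rewrite {}/L.
have gE := good_Ep R hl; have gF := good_Fp R hl; have gH := good_Hp R hl.
have rE := rep_E (R:=R) hl; have rF := rep_F (R:=R) hl; have rH := rep_H (R:=R) hl.
have rz : rep (lzero R) (pzero R) := @rep_zero R.
split; [split; [|split]|split; [split; [|split; [|split]]|]].
- move=> j k hj hk1 hk2.
  have e : (j.+1 + k.-1 = j + k)%N by rewrite addSn -addnS prednK.
  have c1 := cong_EF R hl j.+1 k.-1; rewrite e in c1.
  exact: qeq_via (rbr (rE _) (rF _) (gE _) (gF _)) (rbr (rE _) (rF _) (gE _) (gF _))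
    (good_br (gE _) (gF _)) (good_br (gE _) (gF _)) c1 (cong_EF R hl j k).
- move=> j k _ _.
  exact: qeq_via (rbr (rE _) (rF _) (gE _) (gF _)) (rH _) (good_br (gE _) (gF _)) (gH _)
    (cong_EF R hl j k) (cong_Hp R hl _).
- exact: qeq_via (rH 1) (rep_H1 hl) (gH 1) (good_H1p R hl) (cong_Hp R hl 1) (cong_H1 R hl).
- move=> j _; split; apply: in_OA_rep; [exact: rE|exact: gE|exact: rF|exact: gF|exact: rH|exact: gH].
- exact: span hl.
- exact: indep hl.
- move=> m hm _.
  exact: qeq_via (rH m) rz (gH m) (good0 R) (cong_trans (cong_Hp R hl m) (cong_Hr0' R hm))
    (cong_refl _ _).
move=> j k hj hk; split.
- rewrite /Hz; case: ifP => h.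
    exact: qeq_via (rbr (rE _) (rF _) (gE _) (gF _)) (rH _) (good_br (gE _) (gF _)) (gH _)
      (cong_EF R hl j k) (cong_Hp R hl _).
  have h' : (l <= (j + k).+1)%N by rewrite leqNgt h.
  exact: qeq_via (rbr (rE _) (rF _) (gE _) (gF _)) rz (good_br (gE _) (gF _)) (good0 R)
    (cong_trans (cong_EF R hl j k) (cong_Hr0' R h')) (cong_refl _ _).
- rewrite /Ez; case: ifP => h.
    exact: qeq_via (rbr (rH _) (rE _) (gH _) (gE _)) (rep_scale _ (rE _)) (good_br (gH _) (gE _))
      (good_scale _ (gE _)) (cong_HE R hl j k) (cong_scale _ (cong_Ep R hl _)).
  have h' : (l <= j + k)%N by rewrite leqNgt h.
  exact: qeq_via (rbr (rH _) (rE _) (gH _) (gE _)) (rep_scale _ rz) (good_br (gH _) (gE _))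
    (good_scale _ (good0 R)) (cong_trans (cong_HE R hl j k) (cong_scale _ (cong_Er0' R h'))) (cong_refl _ _).
- rewrite /Fz; case: ifP => h.
    exact: qeq_via (rbr (rH _) (rF _) (gH _) (gF _)) (rep_scale _ (rF _)) (good_br (gH _) (gF _))
      (good_scale _ (gF _)) (cong_HF R hl j k) (cong_scale _ (cong_Fp R hl _)).
  have h' : (l <= j + k)%N by rewrite leqNgt h.
  exact: qeq_via (rbr (rH _) (rF _) (gH _) (gF _)) (rep_scale _ rz) (good_br (gH _) (gF _))
    (good_scale _ (good0 R)) (cong_trans (cong_HF R hl j k) (cong_scale _ (cong_Fr0' R h'))) (cong_refl _ _).
- exact: qeq_via (rbr (rE _) (rE _) (gE _) (gE _)) rz (good_br (gE _) (gE _)) (good0 R)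
    (cong_EE R hl j k) (cong_refl _ _).
- exact: qeq_via (rbr (rF _) (rF _) (gF _) (gF _)) rz (good_br (gF _) (gF _)) (good0 R)
    (cong_FF R hl j k) (cong_refl _ _).
Qed.
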